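(* Let $n,d\ge1$, let $\eta^{(i)}_j\ge0$ ($i,j\in[n]$) be coefficients such that the matrix $A$ with $A_{ij}=1$ if $\eta^{(i)}_j>0$ and $0$ otherwise satisfies $A^n>0$ entrywise, and let $\lambda>0$ be a fixed constant depending only on $n,d$. For $\mathbf{x}_1,\ldots,\mathbf{x}_n\in\mathbb{S}^{d-1}$ define $\Phi(\mathbf{x}_1,\ldots,\mathbf{x}_n)=\min_{\mathbf{v}\in\mathbb{S}^{d-1}}\max_{i\in[n]}\angle(\mathbf{v},\mathbf{x}_i)$. There exists $c=c(n,d,\bm{\eta})>0$ such that the following holds: whenever $\mathbf{x}_1,\ldots,\mathbf{x}_n\in\mathbb{S}^{d-1}$ satisfy $\langle\mathbf{w},\mathbf{x}_i\rangle\ge\lambda$ for all $i$ for some unit vector $\mathbf{w}$, and $\mathbf{x}_1',\ldots,\mathbf{x}_n'$ are obtained from them by $n$ iterations of the update $\mathbf{x}^{(i)}\mapsto P_{\mathbb{S}^{d-1}}\big(\mathbf{x}^{(i)}+\sum_{j=1}^n\eta^{(i)}_j\mathbf{x}^{(j)}\big)$ (applied simultaneously to all $i$), then $\Phi(\mathbf{x}_1',\ldots,\mathbf{x}_n')\le(1-c)\,\Phi(\mathbf{x}_1,\ldots,\mathbf{x}_n)$.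
   Context: $\mathbb{S}^{d-1}$ is the unit sphere in $\mathbb{R}^d$, $P_{\mathbb{S}^{d-1}}(\mathbf{w})=\mathbf{w}/\|\mathbf{w}\|_2$, and $\angle(\mathbf{v},\mathbf{x})\in[0,\pi]$ is the angle between vectors. (The update is the party-model update when no agents are split by the random issue, so the subtracted sum is empty.) *)

(* Defs.v *)
From HB Require Import structures.
From mathcomp Require Import all_boot all_order all_algebra.
From mathcomp Require Import all_classical all_reals all_analysis.

Import Order.TTheory GRing.Theory Num.Theory.
Local Open Scope ring_scope.
Local Open Scope classical_set_scope.

Section Defs.
Context {R : realType}.

Definition dotv {d : nat} (u v : 'rV[R]_d) : R := \sum_(k < d) u ord0 k * v ord0 k.
Definition norm2 {d : nat} (u : 'rV[R]_d) : R := Num.sqrt (dotv u u).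

Definition usphere (d : nat) : set 'rV[R]_d := [set v | norm2 v = 1].

Definition projS {d : nat} (w : 'rV[R]_d) : 'rV[R]_d := (norm2 w)^-1 *: w.

Definition vangle {d : nat} (v x : 'rV[R]_d) : R :=
  acos (dotv v x / (norm2 v * norm2 x)).

(* Phi(x_1..x_n) = min_{v in S^{d-1}} max_i angle(v, x_i);
   the min is attained (compactness), so it equals the infimum. *)
Definition Phi {n d : nat} (x : 'I_n -> 'rV[R]_d) : R :=
  inf [set (\big[Num.max/0]_(i < n) vangle v (x i)) | v in usphere d].

Definition party_update {n d : nat} (eta : 'I_n -> 'I_n -> R)
    (x : 'I_n -> 'rV[R]_d) : 'I_n -> 'rV[R]_d :=
  fun i => projS (x i + \sum_(j < n) eta i j *: x j).

Definition adj_mx {n : nat} (eta : 'I_n -> 'I_n -> R) : 'M[R]_n :=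
  \matrix_(i, j) (if 0 < eta i j then 1 else 0).

End Defs.

(* Main.v *)
Require Import Defs.
From HB Require Import structures.
From mathcomp Require Import all_boot all_order all_algebra.
From mathcomp Require Import all_classical all_reals all_analysis.
From mathcomp Require Import ring lra.
Import Order.TTheory GRing.Theory Num.Theory.
Import numFieldNormedType.Exports.
Local Open Scope ring_scope.
Local Open Scope classical_set_scope.
Set Implicit Arguments. Unset Strict Implicit.

Lemma dotvC (R : realType) d (u v : 'rV[R]_d) : dotv u v = dotv v u.
Proof. by rewrite /dotv; apply eq_bigr => k _; rewrite mulrC. Qed.

Lemma dotv_sumr (R : realType) d n (u : 'rV[R]_d) (c : 'I_n -> R) (y : 'I_n -> 'rV[R]_d) :
  dotv u (\sum_(j < n) c j *: y j) = \sum_(j < n) c j * dotv u (y j).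
Proof.
rewrite /dotv; under eq_bigr do rewrite summxE mulr_sumr.
rewrite exchange_big; apply eq_bigr => j _; rewrite mulr_sumr.
by apply eq_bigr => k _; rewrite mxE mulrCA.
Qed.

Lemma dotv_suml (R : realType) d n (u : 'rV[R]_d) (c : 'I_n -> R) (y : 'I_n -> 'rV[R]_d) :
  dotv (\sum_(j < n) c j *: y j) u = \sum_(j < n) c j * dotv (y j) u.
Proof. by rewrite dotvC dotv_sumr; apply eq_bigr => j _; rewrite dotvC. Qed.

Lemma dotvZl (R : realType) d (a : R) (u v : 'rV[R]_d) : dotv (a *: u) v = a * dotv u v.
Proof. by rewrite /dotv mulr_sumr; apply eq_bigr => k _; rewrite mxE mulrA. Qed.

Lemma dotvZr (R : realType) d (a : R) (u v : 'rV[R]_d) : dotv u (a *: v) = a * dotv u v.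
Proof. by rewrite dotvC dotvZl dotvC. Qed.

Lemma dotvDl (R : realType) d (u u' v : 'rV[R]_d) : dotv (u + u') v = dotv u v + dotv u' v.
Proof. by rewrite /dotv -big_split; apply eq_bigr => k _; rewrite mxE mulrDl. Qed.

Lemma dotvDr (R : realType) d (u v v' : 'rV[R]_d) : dotv u (v + v') = dotv u v + dotv u v'.
Proof. by rewrite dotvC dotvDl; congr (_ + _); apply: dotvC. Qed.

Lemma dotvNl (R : realType) d (u v : 'rV[R]_d) : dotv (- u) v = - dotv u v.
Proof. by rewrite -scaleN1r dotvZl mulN1r. Qed.

Lemma dotvNr (R : realType) d (u v : 'rV[R]_d) : dotv u (- v) = - dotv u v.
Proof. by rewrite dotvC dotvNl dotvC. Qed.

Lemma dotv_ge0 (R : realType) d (u : 'rV[R]_d) : 0 <= dotv u u.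
Proof. by apply: sumr_ge0 => k _; rewrite -expr2 sqr_ge0. Qed.

Lemma cs_unit (R : realType) d (w z : 'rV[R]_d) : dotv w w = 1 ->
  (dotv w z) ^+ 2 <= dotv z z.
Proof.
move=> hw; have := dotv_ge0 (z - dotv w z *: w).
rewrite !(dotvDl, dotvDr, dotvNl, dotvNr, dotvZl, dotvZr) hw (dotvC z w).
move=> h; nra.
Qed.

Lemma unit_dot_le1 (R : realType) d (w z : 'rV[R]_d) : dotv w w = 1 -> dotv z z = 1 ->
  -1 <= dotv w z <= 1.
Proof. move=> hw hz; have := cs_unit z hw; rewrite hz => h; apply/andP; split; nra. Qed.

Lemma usphereP (R : realType) d (u : 'rV[R]_d) : (u \in usphere d) <-> dotv u u = 1.
Proof.
rewrite inE /usphere /norm2 /=; split => h.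
  by rewrite -(sqr_sqrtr (dotv_ge0 u)) h expr1n.
by rewrite h sqrtr1.
Qed.

Lemma quad_exp (R : realType) d n (c : 'I_n -> R) (y : 'I_n -> 'rV[R]_d) :
  dotv (\sum_(j < n) c j *: y j) (\sum_(j < n) c j *: y j) =
  \sum_(j < n) \sum_(k < n) c j * c k * dotv (y j) (y k).
Proof.
rewrite dotv_suml; apply eq_bigr => j _; rewrite dotv_sumr mulr_sumr.
by apply eq_bigr => k _; rewrite mulrA [c j * c k]mulrC -mulrA [X in _ * X]mulrC mulrA.
Qed.

Lemma cos_le_iff (R : realType) (x y : R) : 0 <= x <= pi -> 0 <= y <= pi ->
  (cos y <= cos x) = (x <= y).
Proof.
move=> hx hy; rewrite leNgt ltr_cos ?in_itv //=; by rewrite -leNgt.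
Qed.

Lemma acos_anti (R : realType) (u u' : R) : -1 <= u <= 1 -> -1 <= u' <= 1 -> u <= u' ->
  acos u' <= acos u.
Proof.
move=> hu hu' h.
have h1 : 0 <= acos u <= pi by rewrite acos_ge0 ?acos_lepi.
have h2 : 0 <= acos u' <= pi by rewrite acos_ge0 ?acos_lepi.
rewrite -cos_le_iff // !acosK ?in_itv //.
Qed.

Lemma acos_le_of_cos (R : realType) (b y : R) : -1 <= b <= 1 -> 0 <= y <= pi ->
  cos y <= b -> acos b <= y.
Proof.
move=> hb hy h.
have h1 : 0 <= acos b <= pi by rewrite acos_ge0 ?acos_lepi.
by rewrite -cos_le_iff // acosK ?in_itv.
Qed.

Lemma sin_bounds (R : realType) (y : R) : 0 <= y <= pi -> y * cos y <= sin y <= y.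
Proof.
move=> /andP[y0 ypi].
have [->|yp] := eqVneq y 0; first by rewrite sin0 mul0r lexx.
have ylt : 0 < y by rewrite lt_neqAle eq_sym yp.
have [c cin hc] : exists2 c : R, c \in `]0, y[%R & sin y - sin 0 = cos c * (y - 0).
  apply: MVT => //.
  exact/continuous_subspaceT/continuous_sin.
move: cin; rewrite in_itv /= => /andP[c0 cy].
move: hc; rewrite sin0 !subr0 => ->.
apply/andP; split.
  rewrite mulrC; apply: ler_wpM2r; first exact: ltW.
  rewrite cos_le_iff ?(ltW cy) //.
    by rewrite (ltW c0) (le_trans (ltW cy)).
  by rewrite y0.
by rewrite mulrC ler_piMr ?cos_le1 // ltW.
Qed.

Lemma angle_contract (R : realType) (a b k c : R) : 0 <= a <= 1 -> -1 <= b <= 1 ->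
  0 <= c -> 3 * c <= k -> c <= 1 -> a + k * (1 - a) <= b ->
  acos b <= (1 - c) * acos a.
Proof.
move=> /andP[a0 a1] hb c0 ck c1 hab.
have ha : -1 <= a <= 1 by rewrite a1 andbT (le_trans _ a0) // lerN10.
set al := acos a.
have al0 : 0 <= al by exact: acos_ge0.
have alpi : al <= pi by exact: acos_lepi.
have cal : cos al = a by rewrite /al acosK // in_itv.
have hy : 0 <= (1 - c) * al <= pi.
  apply/andP; split; first by rewrite mulr_ge0 // subr_ge0.
  apply: le_trans alpi; rewrite ler_piMl //; lra.
apply: acos_le_of_cos => //.
have -> : (1 - c) * al = al - c * al by ring.
rewrite cosB cal.
have hca : 0 <= c * al <= pi.
  apply/andP; split; first exact: mulr_ge0.
  by apply: le_trans alpi; rewrite ler_piMl.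
have [s1 s2] : c * al * cos (c * al) <= sin (c * al) /\ sin (c * al) <= c * al.
  by have /andP[] := sin_bounds hca.
have sin0' : 0 <= sin al by apply: sin_ge0_pi; rewrite al0.
have sa2 : sin al ^+ 2 = 1 - a ^+ 2 by rewrite sin2cos2 cal.
set h := al / 2.
have h0 : 0 <= h <= pi / 2.
  by apply/andP; split; [rewrite divr_ge0 | rewrite ler_pM2r].
have hh : al = h *+ 2 by rewrite /h -mulr_natr mulfVK // pnatr_eq0.
have ch2 : cos h ^+ 2 *+ 2 - 1 = a by rewrite -cos_mulr2n -hh.
have ch0 : 0 <= cos h.
  apply: cos_ge0_pihalf; case/andP: h0 => h0 h1; rewrite h1 andbT.
  by apply: le_trans h0; rewrite oppr_le0 divr_ge0 // pi_ge0.
have hpi : 0 <= h <= pi.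
  move: h0 => /andP[? hp]; apply/andP; split=> //; apply: le_trans hp _.
  by rewrite ler_pdivrMr // ler_peMr // ?pi_ge0 // ler1n.
have [sh1 _] : h * cos h <= sin h /\ sin h <= h by have /andP[] := sin_bounds hpi.
have sh2 : sin h ^+ 2 = 1 - cos h ^+ 2 by rewrite sin2cos2.
have hcos0 : 0 <= h * cos h by rewrite mulr_ge0 //; case/andP: h0.
have : (h * cos h) ^+ 2 <= sin h ^+ 2.
  by rewrite !expr2; apply: ler_pM => //; exact: le_trans sh1.
rewrite exprMn sh2 => hq.
have Ceq : cos h ^+ 2 = (1 + a) / 2.
  move: ch2; rewrite -mulr_natr => ch2; lra.
have e1 : h ^+ 2 * cos h ^+ 2 = (h ^+ 2 + h ^+ 2 * a) / 2 by rewrite Ceq; ring.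
have Pa : 0 <= h ^+ 2 * a by rewrite mulr_ge0 // sqr_ge0.
have hq2 : h ^+ 2 <= 1 - a by move: hq; rewrite e1 Ceq => hq; lra.
have al2 : al ^+ 2 <= 4 * (1 - a).
  have -> : al ^+ 2 = 4 * h ^+ 2 by rewrite hh -mulr_natr; ring.
  lra.
have p0 : 0 <= sin al * al by rewrite mulr_ge0.
have a2 : 0 <= 1 - a ^+ 2 by rewrite subr_ge0 expr_le1.
have p2 : (sin al * al) ^+ 2 <= 8 * (1 - a) ^+ 2.
  rewrite exprMn sa2.
  have q1 : (1 - a ^+ 2) * al ^+ 2 <= (1 - a ^+ 2) * (4 * (1 - a)) by rewrite ler_wpM2l.
  have -> : 8 * (1 - a) ^+ 2 = (1 - a) ^+ 2 * 8 by rewrite mulrC.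
  have q2 : (1 - a ^+ 2) * (4 * (1 - a)) = (1 - a) ^+ 2 * (4 * (1 + a)) by ring.
  have q3 : (1 - a) ^+ 2 * (4 * (1 + a)) <= (1 - a) ^+ 2 * 8.
    by rewrite ler_wpM2l ?sqr_ge0 //; lra.
  lra.
have p3 : sin al * al <= 3 * (1 - a).
  rewrite -(@ler_pXn2r _ 2) // ?nnegrE //; last lra.
  have : 8 * (1 - a) ^+ 2 <= (3 * (1 - a)) ^+ 2.
    by rewrite exprMn ler_wpM2r ?sqr_ge0 // -natrX ler_nat.
  lra.
have t1 : a * cos (c * al) <= a by rewrite ler_piMr // cos_le1.
have t2 : sin al * sin (c * al) <= c * (sin al * al).
  by rewrite mulrCA ler_wpM2l.
have t3 : c * (sin al * al) <= c * (3 * (1 - a)) by rewrite ler_wpM2l.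
have t4 : c * (3 * (1 - a)) <= k * (1 - a).
  by rewrite mulrA ler_wpM2r //; lra.
lra.
Qed.

Lemma fin_lb (R : realType) (T : finType) (f : T -> R) : (forall t, 0 < f t) ->
  exists m, [/\ 0 < m, m <= 1 & forall t, m <= f t].
Proof.
move=> hf.
suff [m [m0 m1 hm]] : exists m, [/\ 0 < m, m <= 1 & forall t, t \in enum T -> m <= f t].
  by exists m; split => // t; apply: hm; rewrite mem_enum.
elim: (enum T) => [|x s [m [m0 m1 hm]]]; first by exists 1; split.
exists (Num.min m (f x)); split.
- by rewrite lt_min m0 hf.
- by rewrite ge_min m1.
- move=> t; rewrite inE => /orP[/eqP ->|ts]; first by rewrite ge_min lexx orbT.
  by rewrite ge_min hm.
Qed.

Lemma fin_argmin (R : realType) (T : finType) (t0 : T) (f : T -> R) :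
  exists t, forall s, f t <= f s.
Proof.
suff [t ht] : exists t, forall s, s \in enum T -> f t <= f s.
  by exists t => s; apply: ht; rewrite mem_enum.
elim: (enum T) => [|x s [t ht]]; first by exists t0.
have [le|lt] := leP (f x) (f t).
  exists x => u; rewrite inE => /orP[/eqP ->//|us]; exact: le_trans le (ht _ us).
exists t => u; rewrite inE => /orP[/eqP ->|us]; [exact: ltW | exact: ht].
Qed.

Lemma sum_ge_term (R : realType) n (F : 'I_n -> R) (p : 'I_n) :
  (forall j, 0 <= F j) -> F p <= \sum_j F j.
Proof.
move=> hF; rewrite (bigD1 p) //= lerDl; exact: sumr_ge0.
Qed.

Lemma delta_sumv (R : realType) n d (y : 'I_n -> 'rV[R]_d) (i : 'I_n) :
  \sum_j (i == j)%:R *: y j = y i.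
Proof.
rewrite (bigD1 i) //= eqxx scale1r big1 ?addr0 // => j hj.
by rewrite eq_sym (negbTE hj) scale0r.
Qed.

Lemma delta_sum (R : realType) n (g : 'I_n -> R) (i : 'I_n) :
  \sum_j (i == j)%:R * g j = g i.
Proof.
rewrite (bigD1 i) //= eqxx mul1r big1 ?addr0 // => j hj.
by rewrite eq_sym (negbTE hj) mul0r.
Qed.

Lemma sum_sqr (R : realType) n (b : 'I_n -> R) :
  (\sum_j b j) ^+ 2 = \sum_j \sum_k b j * b k.
Proof.
by rewrite expr2 mulr_suml; apply eq_bigr => j _; rewrite mulr_sumr.
Qed.

Lemma adj_ge0 (R : realType) n (eta : 'I_n -> 'I_n -> R) t i j :
  0 <= (adj_mx eta ^+ t) i j.
Proof.
elim: t i j => [|t IH] i j.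
  by rewrite expr0 mxE ler0n.
rewrite exprS -mulmxE mxE; apply: sumr_ge0 => k _; apply: mulr_ge0 => //.
by rewrite mxE; case: ifP.
Qed.

Lemma iter_struct (R : realType) n d (eta : 'I_n -> 'I_n -> R)
  (heta : forall i j, 0 <= eta i j) (m H : R) (hm : 0 < m)
  (hmA : forall i j, m * adj_mx eta i j <= eta i j) (H0 : 0 <= H)
  (hH : forall i, \sum_k eta i k <= H)
  (x : 'I_n -> 'rV[R]_d) (w : 'rV[R]_d) (lam : R) (hlam : 0 < lam)
  (hx : forall i, dotv (x i) (x i) = 1) (hw : dotv w w = 1)
  (hxw : forall i, lam <= dotv w (x i)) t :
  exists W : 'I_n -> 'I_n -> R,
   [/\ (forall i j, 0 <= W i j),
       (forall i j, (m / (1 + H)) ^+ t * (adj_mx eta ^+ t) i j <= W i j),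
       (forall i, iter t (party_update eta) x i = \sum_j W i j *: x j),
       (forall i, dotv (iter t (party_update eta) x i) (iter t (party_update eta) x i) = 1) &
       (forall i, lam <= dotv w (iter t (party_update eta) x i))].
Proof.
elim: t => [|t [W [W0 Wlb Wx Wu Ww]]].
  exists (fun i j => (1%:M : 'M[R]_n) i j); split => //=.
  - by move=> i j; rewrite mxE ler0n.
  - by move=> i j; rewrite expr0 mul1r.
  - by move=> i; under eq_bigr do rewrite mxE; rewrite delta_sumv.
set y := iter t (party_update eta) x in Wx Wu Ww *.
set beta := fun i k => (i == k)%:R + eta i k.
have beta0 : forall i k, 0 <= beta i k by move=> i k; rewrite addr_ge0.
have zE : forall i, y i + \sum_k eta i k *: y k = \sum_k beta i k *: y k.
  by move=> i; under [RHS]eq_bigr do rewrite scalerDl; rewrite big_split /= delta_sumv.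
have Sb : forall i, \sum_k beta i k = 1 + \sum_k eta i k.
  move=> i; rewrite big_split /=; congr (_ + _).
  rewrite (bigD1 i) //= eqxx big1 ?addr0 // => j hj; by rewrite eq_sym (negbTE hj).
set N := fun i => norm2 (\sum_k beta i k *: y k).
have N2 : forall i, N i ^+ 2 = dotv (\sum_k beta i k *: y k) (\sum_k beta i k *: y k).
  by move=> i; rewrite /N /norm2 sqr_sqrtr // dotv_ge0.
have N0 : forall i, 0 <= N i by move=> i; rewrite /N /norm2 sqrtr_ge0.
have Nub : forall i, N i <= \sum_k beta i k.
  move=> i; rewrite -(@ler_pXn2r _ 2) // ?nnegrE ?sumr_ge0 //.
  rewrite N2 quad_exp sum_sqr; apply: ler_sum => j _; apply: ler_sum => k _.
  rewrite -[X in _ <= X]mulr1; apply: ler_wpM2l; first by rewrite mulr_ge0.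
  by have /andP[] := unit_dot_le1 (Wu j) (Wu k).
have wz : forall i, lam * \sum_k beta i k <= dotv w (\sum_k beta i k *: y k).
  move=> i; rewrite dotv_sumr mulr_sumr; apply: ler_sum => k _.
  by rewrite mulrC ler_wpM2l.
have Nlb : forall i, dotv w (\sum_k beta i k *: y k) <= N i.
  move=> i; have := cs_unit (\sum_k beta i k *: y k) hw; rewrite -N2 => h.
  have [ha|ha] := lerP (dotv w (\sum_k beta i k *: y k)) 0; first exact: le_trans ha (N0 i).
  by rewrite -(@ler_pXn2r _ 2) // ?nnegrE ?N0 // ltW.
have Sb1 : forall i, 1 <= \sum_k beta i k by move=> i; rewrite Sb lerDl sumr_ge0.
have Npos : forall i, 0 < N i.
  move=> i; apply: lt_le_trans (Nlb i); apply: lt_le_trans (wz i).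
  by rewrite mulr_gt0 // (lt_le_trans ltr01).
have NH : forall i, N i <= 1 + H.
  by move=> i; apply: le_trans (Nub i) _; rewrite Sb lerD2l.
have upd : forall i, iter t.+1 (party_update eta) x i = (N i)^-1 *: \sum_k beta i k *: y k.
  by move=> i; rewrite iterS /party_update /projS zE.
exists (fun i j => (N i)^-1 * \sum_k beta i k * W k j); split.
- move=> i j; apply: mulr_ge0; first by rewrite invr_ge0.
  by apply: sumr_ge0 => k _; rewrite mulr_ge0.
- move=> i j; rewrite !exprS -mulmxE mxE.
  have kap0 : 0 <= (m / (1 + H)) ^+ t by rewrite exprn_ge0 // divr_ge0 // ?ltW //; lra.
  have -> : m / (1 + H) * (m / (1 + H)) ^+ t * \sum_k adj_mx eta i k * (adj_mx eta ^+ t) k j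
     = (1 + H)^-1 * \sum_k (m * adj_mx eta i k) * ((m / (1 + H)) ^+ t * (adj_mx eta ^+ t) k j).
    rewrite !mulr_sumr; apply eq_bigr => k _; ring.
  apply: (@le_trans _ _ ((1 + H)^-1 * \sum_k beta i k * W k j)).
    apply: ler_wpM2l; first by rewrite invr_ge0; lra.
    apply: ler_sum => k _; apply: ler_pM.
    + by apply: mulr_ge0; [exact: ltW | rewrite mxE; case: ifP].
    + by apply: mulr_ge0 => //; exact: adj_ge0.
    + by apply: le_trans (hmA i k) _; rewrite /beta lerDr ler0n.
    + exact: Wlb.
  apply: ler_wpM2r; first by apply: sumr_ge0 => k _; rewrite mulr_ge0.
  have H1 : 0 < 1 + H by lra.
  by rewrite lef_pV2 ?posrE ?NH ?Npos.
- move=> i; rewrite upd.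
  under eq_bigr do rewrite Wx scaler_sumr.
  rewrite exchange_big scaler_sumr; apply eq_bigr => j _.
  rewrite -scalerA scaler_suml; congr (_ *: _); apply eq_bigr => k _.
  by rewrite scalerA.
- move=> i; rewrite upd dotvZl dotvZr -N2.
  have := Npos i; move=> Ni; field; exact: lt0r_neq0.
- move=> i; rewrite upd dotvZr mulrC ler_pdivlMr //.
  exact: le_trans (ler_wpM2l (ltW hlam) (Nub i)) (wz i).
Qed.

Definition Mx (R : realType) n d (y : 'I_n -> 'rV[R]_d) (v : 'rV[R]_d) : R :=
  \big[Num.max/0]_(i < n) vangle v (y i).

Lemma usphereP' (R : realType) d (u : 'rV[R]_d) : usphere d u <-> dotv u u = 1.
Proof. by rewrite -usphereP inE. Qed.

Lemma Mx_ge0 (R : realType) n d (y : 'I_n -> 'rV[R]_d) v : 0 <= Mx y v.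
Proof. exact: bigmax_ge_id. Qed.

Lemma le_Mx (R : realType) n d (y : 'I_n -> 'rV[R]_d) v i : vangle v (y i) <= Mx y v.
Proof. exact: le_bigmax. Qed.

Lemma Mx_le (R : realType) n d (y : 'I_n -> 'rV[R]_d) v B : 0 <= B ->
  (forall i, vangle v (y i) <= B) -> Mx y v <= B.
Proof. by move=> B0 h; apply: bigmax_le. Qed.

Lemma vangle_unit (R : realType) d (v u : 'rV[R]_d) : dotv v v = 1 -> dotv u u = 1 ->
  vangle v u = acos (dotv v u).
Proof. by move=> hv hu; rewrite /vangle /norm2 hv hu sqrtr1 mulr1 divr1. Qed.

Lemma Phi_lb (R : realType) n d (y : 'I_n -> 'rV[R]_d) :
  has_lbound [set Mx y v | v in @usphere R d].
Proof. by exists 0 => r [v _ <-]; exact: Mx_ge0. Qed.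

Lemma Phi_le (R : realType) n d (y : 'I_n -> 'rV[R]_d) v : @usphere R d v -> Phi y <= Mx y v.
Proof. by move=> hv; apply: ge_inf; [exact: Phi_lb | exists v]. Qed.

Lemma Phi_ge0 (R : realType) n d (y : 'I_n -> 'rV[R]_d) v0 : @usphere R d v0 -> 0 <= Phi y.
Proof.
move=> hv; apply: lb_le_inf; first by exists (Mx y v0), v0.
by move=> r [v _ <-]; exact: Mx_ge0.
Qed.

Lemma Phi_approx (R : realType) n d (y : 'I_n -> 'rV[R]_d) v0 e : @usphere R d v0 -> 0 < e ->
  exists v, @usphere R d v /\ Mx y v < Phi y + e.
Proof.
move=> hv e0; have [r [v hv' <-] hr] := inf_adherent e0 (conj (ex_intro _ (Mx y v0) (ex_intro2 _ _ v0 hv erefl)) (Phi_lb y)).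
by exists v.
Qed.

Lemma main_step (R : realType) n d (x x' : 'I_n -> 'rV[R]_d) (W : 'I_n -> 'I_n -> R)
  (w : 'rV[R]_d) (lam eps c : R) (p q : 'I_n)
  (hlam : 0 < lam) (hlam1 : lam <= 1) (he0 : 0 < eps) (he1 : eps <= 1)
  (hc : c = lam ^+ 2 * eps ^+ 2 / 16 / 3)
  (hx : forall i, dotv (x i) (x i) = 1) (hw : dotv w w = 1)
  (hxw : forall i, lam <= dotv w (x i))
  (hW0 : forall i j, 0 <= W i j) (hWe : forall i j, eps <= W i j)
  (hWx : forall i, x' i = \sum_j W i j *: x j)
  (hx' : forall i, dotv (x' i) (x' i) = 1) (hx'w : forall i, lam <= dotv w (x' i))
  (hpq : forall j k, dotv (x p) (x q) <= dotv (x j) (x k))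
  (v : 'rV[R]_d) (hv : dotv v v = 1)
  (hM1 : Mx x v <= acos (dotv (x p) (x q)) + acos (dotv (x p) (x q)))
  (hM2 : Mx x v <= acos (lam / 2)) :
  Mx x' v <= (1 - c) * Mx x v.
Proof.
set g := dotv (x p) (x q); set ga := acos g.
set k2 := lam ^+ 2 * eps ^+ 2 / 16.
have le2 : 0 <= lam ^+ 2 * eps ^+ 2 by rewrite mulr_ge0 ?sqr_ge0.
have k20 : 0 <= k2 by rewrite /k2; lra.
have c0 : 0 <= c by rewrite hc; lra.
have c3 : 3 * c <= k2 by rewrite hc /k2; lra.
have k21 : k2 <= 1.
  have : lam ^+ 2 * eps ^+ 2 <= 1 * 1.
    by apply: ler_pM; rewrite ?sqr_ge0 ?expr_le1 // ltW.
  rewrite mulr1.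
  rewrite /k2; lra.
have c1 : c <= 1 by rewrite hc; move: k21; rewrite /k2; lra.
have M0 := Mx_ge0 x v.
apply: Mx_le; first by rewrite mulr_ge0 // subr_ge0.
move=> i; rewrite vangle_unit //.
have [js hjs] := fin_argmin p (fun j => dotv v (x j)).
set a := dotv v (x js).
have ha1 : -1 <= a <= 1 by exact: unit_dot_le1.
have aM : acos a <= Mx x v by have := le_Mx x v js; rewrite vangle_unit.
have hl2 : -1 <= lam / 2 <= 1 by apply/andP; split; lra.
have a_lb : lam / 2 <= a.
  have h := le_trans aM hM2.
  rewrite -cos_le_iff ?acos_ge0 ?acos_lepi // !acosK ?in_itv // in h.
have hg1 : -1 <= g <= 1 by exact: unit_dot_le1.
have ga0 : 0 <= ga by exact: acos_ge0.
have gapi : ga <= pi by exact: acos_lepi.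
have cga : cos ga = g by rewrite /ga acosK // in_itv.
have a_g : 1 - a <= 4 * (1 - g).
  have [h|h] := lerP ga (pi / 2).
    have h2 : 0 <= ga + ga <= pi by apply/andP; split; lra.
    have h3 : cos (ga + ga) <= a.
      have h4 := le_trans aM hM1.
      rewrite -cos_le_iff ?acos_ge0 ?acos_lepi // acosK ?in_itv // in h4.
    move: h3; rewrite -mulr2n cos_mulr2n cga mulr2n => h3.
    have : 0 <= (1 - g) ^+ 2 by exact: sqr_ge0.
    case/andP: hg1 => _ g1; nra.
  have : cos ga <= cos (pi / 2).
    have hp : 0 <= (pi : R) / 2 <= pi.
      by apply/andP; split; [rewrite divr_ge0 // pi_ge0 | have := @pi_ge0 R; lra].
    have hga : 0 <= ga <= pi by rewrite ga0 gapi.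
    by rewrite cos_le_iff // ltW.
  rewrite cga cos_pihalf => g0; lra.
set T := \sum_j W i j.
have T0 : 0 <= T by apply: sumr_ge0.
set b := dotv v (x' i).
have bE : b = \sum_j W i j * dotv v (x j) by rewrite /b hWx dotv_sumr.
have bTa : T * a <= b.
  by rewrite bE /T mulr_suml; apply: ler_sum => j _; apply: ler_wpM2l.
have hb1 : -1 <= b <= 1 by exact: unit_dot_le1.
have lamT : lam * T <= 1.
  have : dotv w (x' i) <= 1 by have /andP[] := unit_dot_le1 hw (hx' i).
  apply: le_trans; rewrite hWx dotv_sumr /T mulr_sumr; apply: ler_sum => j _.
  by rewrite mulrC ler_wpM2l.
have T2 : 1 + eps ^+ 2 * (1 - g) <= T ^+ 2.
  have E1 : 1 = \sum_j \sum_k W i j * W i k * dotv (x j) (x k).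
    by rewrite -(hx' i) hWx quad_exp.
  have E : T ^+ 2 - 1 = \sum_j \sum_k W i j * W i k * (1 - dotv (x j) (x k)).
    rewrite {1}E1 /T sum_sqr -sumrB; apply eq_bigr => j _.
    by rewrite -sumrB; apply eq_bigr => k _; ring.
  have nn : forall j k, 0 <= W i j * W i k * (1 - dotv (x j) (x k)).
    move=> j k; rewrite !mulr_ge0 // subr_ge0.
    by have /andP[] := unit_dot_le1 (hx j) (hx k).
  have L1 : W i p * W i q * (1 - g) <= T ^+ 2 - 1.
    rewrite E; apply: (@le_trans _ _ (\sum_k W i p * W i k * (1 - dotv (x p) (x k)))).
      exact: (@sum_ge_term _ _ (fun k => W i p * W i k * (1 - dotv (x p) (x k))) q (nn p)).
    apply: (@sum_ge_term _ _ (fun j => \sum_k W i j * W i k * (1 - dotv (x j) (x k))) p) => j.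
    by apply: sumr_ge0 => k _; exact: nn.
  have L2 : eps ^+ 2 * (1 - g) <= W i p * W i q * (1 - g).
    apply: ler_wpM2r; first by case/andP: hg1 => _ ?; lra.
    by rewrite expr2; apply: ler_pM; [exact: ltW|exact: ltW|exact: hWe|exact: hWe].
  lra.
have T1 : 1 <= T.
  have : 1 <= T ^+ 2.
    apply: le_trans T2; rewrite lerDl mulr_ge0 ?sqr_ge0 //; case/andP: hg1 => _ ?; lra.
  move=> h; nra.
have s1 : lam * (T ^+ 2 - 1) <= 2 * (T - 1).
  have -> : lam * (T ^+ 2 - 1) = (T - 1) * (lam * (T + 1)) by ring.
  rewrite mulrC; apply: ler_wpM2r; lra.
have s2 : lam * (eps ^+ 2 * (1 - a) / 4) <= lam * (T ^+ 2 - 1).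
  apply: ler_wpM2l; first exact: ltW.
  have : eps ^+ 2 * ((1 - a) / 4) <= eps ^+ 2 * (1 - g).
    by apply: ler_wpM2l; rewrite ?sqr_ge0 //; lra.
  rewrite mulrA; lra.
have s3 : a * (T - 1) <= b - a.
  have -> : a * (T - 1) = T * a - a by ring.
  lra.
have s4 : lam / 2 * (T - 1) <= a * (T - 1) by apply: ler_wpM2r; lra.
have s5 : k2 * (1 - a) <= lam / 2 * (T - 1).
  have h : lam * eps ^+ 2 * (1 - a) / 8 <= T - 1 by lra.
  have l2 : 0 <= lam / 2 by lra.
  have := ler_wpM2l l2 h; rewrite /k2 => h2.
  lra.
have hab : a + k2 * (1 - a) <= b by lra.
apply: le_trans (angle_contract _ hb1 c0 c3 c1 hab) _.
  by case/andP: ha1 => _ ->; rewrite andbT; lra.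
by apply: ler_wpM2l => //; rewrite subr_ge0.
Qed.

Theorem lemma3p13 (R : realType) (n d : nat) (hn : (1 <= n)%N) (hd : (1 <= d)%N)
  (eta : 'I_n -> 'I_n -> R)
  (heta : forall i j, 0 <= eta i j)
  (hA : forall i j, 0 < (adj_mx eta ^+ n) i j)
  (lam : R) (hlam : 0 < lam) :
  exists c : R, 0 < c /\
    forall (x : 'I_n -> 'rV[R]_d) (w : 'rV[R]_d),
      (forall i, x i \in usphere d) ->
      w \in usphere d ->
      (forall i, lam <= dotv w (x i)) ->
      Phi (iter n (party_update eta) x) <= (1 - c) * Phi x.
Proof.
pose i0 : 'I_n := Ordinal hn.
have [lam1|lam1] := lerP lam 1; last first.
  exists (1/2); split; first lra.
  move=> x w hx hw hxw; exfalso.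
  have := unit_dot_le1 (w:=w) (z:=x i0) (proj1 (usphereP w) hw) (proj1 (usphereP (x i0)) (hx i0)).
  have := hxw i0; lra.
have fpos : forall pr : 'I_n * 'I_n, 0 < (if 0 < eta pr.1 pr.2 then eta pr.1 pr.2 else 1).
  by move=> pr; case: ifP => // _; exact: ltr01.
have [m [m0 m1 hm]] := fin_lb fpos.
have hmA : forall i j, m * adj_mx eta i j <= eta i j.
  move=> i j; rewrite mxE; case: ifP => h.
    by rewrite mulr1; have := hm (i, j); rewrite /= h.
  by rewrite mulr0.
set H := \sum_i \sum_k eta i k.
have H0 : 0 <= H by apply: sumr_ge0 => i _; apply: sumr_ge0.
have hH : forall i, \sum_k eta i k <= H.
  by move=> i; apply: (@sum_ge_term _ _ (fun i => \sum_k eta i k) i) => j; apply: sumr_ge0.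
have Apos : forall pr : 'I_n * 'I_n, 0 < (adj_mx eta ^+ n) pr.1 pr.2 by move=> pr; exact: hA.
have [mu [mu0 mu1 hmu]] := fin_lb Apos.
set kap := m / (1 + H).
have kap0 : 0 < kap by rewrite divr_gt0 //; lra.
have kap1 : kap <= 1 by rewrite ler_pdivrMr; lra.
set eps := kap ^+ n * mu.
have eps0 : 0 < eps by rewrite mulr_gt0 // exprn_gt0.
have eps1 : eps <= 1 by rewrite mulr_ile1 // ?exprn_ge0 ?exprn_ile1 // ?ltW.
set c := lam ^+ 2 * eps ^+ 2 / 16 / 3.
have le2 : 0 < lam ^+ 2 * eps ^+ 2 by rewrite mulr_gt0 // exprn_gt0.
have le21 : lam ^+ 2 * eps ^+ 2 <= 1 * 1.
  by apply: ler_pM; rewrite ?sqr_ge0 ?expr_le1 // ltW.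
have c1 : c <= 1 by rewrite /c; lra.
exists c; split; first by rewrite /c; lra.
move=> x w hx hw hxw.
have hxu : forall i, dotv (x i) (x i) = 1 by move=> i; apply/usphereP.
have hwu : dotv w w = 1 by apply/usphereP.
have [W [W0 Wlb Wx Wu Ww]] := iter_struct heta m0 hmA H0 hH hlam hxu hwu hxw n.
have hWe : forall i j, eps <= W i j.
  move=> i j; apply: le_trans (Wlb i j); apply: ler_wpM2l.
    by rewrite exprn_ge0 // ltW.
  exact: (hmu (i, j)).
have [pq hpq] := fin_argmin (i0, i0) (fun pr : 'I_n * 'I_n => dotv (x pr.1) (x pr.2)).
have hpq' : forall j k, dotv (x pq.1) (x pq.2) <= dotv (x j) (x k) by move=> j k; exact: (hpq (j, k)).
set g := dotv (x pq.1) (x pq.2).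
have hg1 : -1 <= g <= 1 by exact: unit_dot_le1.
set ga := acos g.
have ga0 : 0 <= ga by exact: acos_ge0.
have step : forall v, dotv v v = 1 -> Mx x v <= ga + ga -> Mx x v <= acos (lam / 2) ->
    Phi (iter n (party_update eta) x) <= (1 - c) * Mx x v.
  move=> v hv hM1 hM2.
  apply: le_trans (Phi_le _ (proj2 (usphereP' v) hv)) _.
  exact: (@main_step R n d x (iter n (party_update eta) x) W w lam eps c pq.1 pq.2
    hlam lam1 eps0 eps1 erefl hxu hwu hxw W0 hWe Wx Wu Ww hpq' v hv hM1 hM2).
have hwS : usphere d w by apply/usphereP'.
have P0 : 0 <= Phi x := Phi_ge0 x hwS.
have Pga : Mx x (x i0) <= ga.
  apply: Mx_le => // k; rewrite vangle_unit //.
  by apply: acos_anti => //; exact: unit_dot_le1.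
have hl : -1 <= lam <= 1 by apply/andP; split; lra.
have hl2 : -1 <= lam / 2 <= 1 by apply/andP; split; lra.
have Plam : Mx x w <= acos lam.
  apply: Mx_le; first exact: acos_ge0.
  move=> k; rewrite vangle_unit //.
  by apply: acos_anti => //; exact: unit_dot_le1.
have e1 : acos lam < acos (lam / 2).
  have ha : acos (lam / 2) \in `[0, pi]%R by rewrite in_itv /= acos_ge0 ?acos_lepi.
  have hb : acos lam \in `[0, pi]%R by rewrite in_itv /= acos_ge0 ?acos_lepi.
  rewrite -(ltr_cos hb ha) !acosK ?in_itv //; lra.
have al20 : 0 <= acos (lam / 2) by exact: acos_ge0.
have [gale|gagt] := lerP ga 0.
  have M0 := Mx_ge0 x (x i0).
  have := step (x i0) (hxu i0) ltac:(lra) ltac:(lra).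
  move=> h; apply: le_trans h _; apply: ler_wpM2l; lra.
have PP1 : Phi x <= ga := le_trans (Phi_le x (proj2 (usphereP' _) (hxu i0))) Pga.
have PP2 : Phi x <= acos lam := le_trans (Phi_le x hwS) Plam.
apply/ler_addgt0Pr => e e0.
set e' := Num.min e (Num.min ga (acos (lam / 2) - acos lam)).
have e'0 : 0 < e' by rewrite !lt_min e0 gagt subr_gt0 e1.
have e'e : e' <= e by rewrite ge_min lexx.
have e'g : e' <= ga by rewrite !ge_min lexx orbT.
have e'l : e' <= acos (lam / 2) - acos lam by rewrite !ge_min lexx !orbT.
have [v [hv hMv]] := Phi_approx x hwS e'0.
have hvu := proj1 (usphereP' v) hv.
have := step v hvu ltac:(lra) ltac:(lra).
move=> h; apply: le_trans h _.
have : (1 - c) * Mx x v <= (1 - c) * (Phi x + e') by apply: ler_wpM2l; lra.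
have : (1 - c) * e' <= e' by apply: ler_piMl; rewrite /c; lra.
lra.
Qed.
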